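(* The function $\nu(x)$ is positive for $x\in(1,1.732]$; consequently $\mu(x)$ is decreasing on $(1,1.732]$.
   Context: For $x\ge1$ let $\psi_1(x)=\frac32\int_0^{\pi/2}(1-x^{-2}\sin^2u)^{3/2}\,du$, $\psi_2(x)=\frac32(1-x^{-2})^2\int_0^{\pi/2}\frac{\sin^4v}{\sqrt{1-(1-x^{-2})\sin^2v}}\,dv$, $\phi_1=\frac{4}{3\pi}\psi_1$, $\phi_2=\frac{16}{3\pi}\psi_2$. Let $\mu(x)=\frac{\psi_2'\psi_2+\psi_1'\psi_1}{\psi_2'\psi_1-\psi_1'\psi_2}$ and $\nu=(\phi_2'\phi_1-\phi_1'\phi_2)'(\phi_2'\phi_2+16\phi_1'\phi_1)-(\phi_2'\phi_1-\phi_1'\phi_2)(\phi_2'\phi_2+16\phi_1'\phi_1)'$, so that $\big(\frac{1}{4\mu}\big)'=\nu/(\phi_2'\phi_2+16\phi_1'\phi_1)^2$. *)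

(* Defs.v *)
From Stdlib Require Import Reals.
From Coquelicot Require Import Coquelicot.
Open Scope R_scope.

(* psi_1(x) = 3/2 * int_0^{pi/2} (1 - x^{-2} sin^2 u)^{3/2} du ;
   t^{3/2} is written t * sqrt t (t >= 0 on the relevant range). *)
Definition psi1 (x : R) : R :=
  3/2 * RInt (fun u => (1 - sin u ^ 2 / x ^ 2) * sqrt (1 - sin u ^ 2 / x ^ 2)) 0 (PI/2).

Definition psi2 (x : R) : R :=
  3/2 * (1 - / x ^ 2) ^ 2 *
  RInt (fun v => sin v ^ 4 / sqrt (1 - (1 - / x ^ 2) * sin v ^ 2)) 0 (PI/2).

Definition phi1 (x : R) : R := 4 / (3 * PI) * psi1 x.
Definition phi2 (x : R) : R := 16 / (3 * PI) * psi2 x.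

Definition mu (x : R) : R :=
  (Derive psi2 x * psi2 x + Derive psi1 x * psi1 x) /
  (Derive psi2 x * psi1 x - Derive psi1 x * psi2 x).

Definition Wphi (x : R) : R := Derive phi2 x * phi1 x - Derive phi1 x * phi2 x.
Definition Qphi (x : R) : R := Derive phi2 x * phi2 x + 16 * Derive phi1 x * phi1 x.

Definition nu (x : R) : R := Derive Wphi x * Qphi x - Wphi x * Derive Qphi x.

(* Main.v *)
Require Import Defs.
From Stdlib Require Import Reals Lra Psatz Nsatz.
From Coquelicot Require Import Coquelicot.
Open Scope R_scope.

Lemma sin2_bounds u : 0 <= sin u ^ 2 <= 1.
Proof. pose proof (SIN_bound u). pose proof (pow2_ge_0 (sin u)). split; [lra|]. nra. Qed.

Lemma Rpos_lt1 c u : c < 1 -> 0 < 1 - c * sin u ^ 2.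
Proof. intros Hc. pose proof (sin2_bounds u). destruct (Rle_dec c 0); nra. Qed.

Lemma is_derive_Rpower_comp (g : R -> R) dg x b :
  0 < g x -> is_derive g x dg ->
  is_derive (fun z => Rpower (g z) b) x (b * Rpower (g x) (b-1) * dg).
Proof.
  intros Hg Hd.
  replace (b * Rpower (g x) (b-1) * dg) with (scal dg (b * Rpower (g x) (b-1))).
  2:{ unfold scal; simpl; unfold mult; simpl; ring. }
  apply (is_derive_comp (fun y => Rpower y b) g x).
  - apply is_derive_Reals. apply derivable_pt_lim_power. exact Hg.
  - exact Hd.
Qed.

Lemma continuous_Rpower_pos y b : 0 < y -> continuous (fun z => Rpower z b) y.
Proof.
  intros Hy. apply (ex_derive_continuous (K:=R_AbsRing) (V:=R_NormedModule)). eexists. apply is_derive_Reals.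
  apply derivable_pt_lim_power. exact Hy.
Qed.

Lemma cont_sinpow k (z : R) : continuous (fun u => sin u ^ k) z.
Proof. apply (ex_derive_continuous (K:=R_AbsRing) (V:=R_NormedModule)). auto_derive. auto. Qed.

Lemma cont_integrand k b c z : c < 1 ->
  continuous (fun u => sin u ^ k * Rpower (1 - c * sin u ^ 2) b) z.
Proof.
  intros Hc.
  apply (continuous_mult (fun u => sin u ^ k) (fun u => Rpower (1 - c * sin u ^ 2) b)).
  - apply cont_sinpow.
  - apply (continuous_comp (fun u => 1 - c * sin u ^ 2) (fun y => Rpower y b)).
    + apply (ex_derive_continuous (K:=R_AbsRing) (V:=R_NormedModule)). auto_derive. auto.
    + apply continuous_Rpower_pos. apply Rpos_lt1; auto.
Qed.

Lemma cont2d_u (h : R -> R) x y : continuity_pt h y -> continuity_2d_pt (fun _ v => h v) x y.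
Proof. intros H. apply (continuity_1d_2d_pt_comp h (fun _ v => v)); auto. apply continuity_2d_pt_id2. Qed.

Lemma cont2d_integrand k b c t : c < 1 ->
  continuity_2d_pt (fun u v => sin v ^ k * Rpower (1 - u * sin v ^ 2) b) c t.
Proof.
  intros Hc.
  apply continuity_2d_pt_mult.
  - apply cont2d_u. apply continuity_pt_filterlim. apply cont_sinpow.
  - apply (continuity_1d_2d_pt_comp (fun z => Rpower z b) (fun u v => 1 - u * sin v ^ 2)).
    + apply continuity_pt_filterlim. apply continuous_Rpower_pos. apply Rpos_lt1; auto.
    + apply continuity_2d_pt_minus. apply continuity_2d_pt_const.
      apply continuity_2d_pt_mult. apply continuity_2d_pt_id1.
      apply cont2d_u. apply continuity_pt_filterlim. apply cont_sinpow.
Qed.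

Definition J (k : nat) (b c : R) :=
  RInt (fun u => sin u ^ k * Rpower (1 - c * sin u ^ 2) b) 0 (PI/2).

Lemma ex_RInt_J k b c : c < 1 -> ex_RInt (fun u => sin u ^ k * Rpower (1 - c * sin u ^ 2) b) 0 (PI/2).
Proof.
  intros Hc. apply (ex_RInt_continuous (V:=R_CompleteNormedModule)). intros z _. apply cont_integrand; auto.
Qed.

Lemma is_derive_integrand k b c v : c < 1 ->
  is_derive (fun z => sin v ^ k * Rpower (1 - z * sin v ^ 2) b) c
    (- b * (sin v ^ (k+2) * Rpower (1 - c * sin v ^ 2) (b - 1))).
Proof.
  intros Hc.
  assert (H := is_derive_Rpower_comp (fun z => 1 - z * sin v ^ 2) (- sin v ^ 2) c b (Rpos_lt1 c v Hc)).
  assert (H1 : is_derive (fun z : R => 1 - z * sin v ^ 2) c (- sin v ^ 2)).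
  { auto_derive; auto; ring. }
  specialize (H H1).
  assert (H2 : is_derive (fun z => Rpower (1 - z * sin v ^ 2) b) c
            (b * Rpower (1 - c * sin v ^ 2) (b-1) * - sin v ^ 2)) by exact H.
  apply (is_derive_scal _ _ (sin v ^ k)) in H2.
  replace (- b * (sin v ^ (k + 2) * Rpower (1 - c * sin v ^ 2) (b - 1)))
    with (sin v ^ k * (b * Rpower (1 - c * sin v ^ 2) (b - 1) * - sin v ^ 2)).
  exact H2. rewrite pow_add. ring.
Qed.

Lemma locally_lt1 c : c < 1 -> locally c (fun y => y < 1).
Proof. intros Hc. apply (open_lt 1 c Hc). Qed.

Lemma J_deriv k b c : c < 1 -> is_derive (J k b) c (- b * J (k+2) (b-1) c).
Proof.
  intros Hc. unfold J.
  set (f := fun z u => sin u ^ k * Rpower (1 - z * sin u ^ 2) b).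
  assert (HD : forall y t, y < 1 -> Derive (fun z => f z t) y =
     - b * (sin t ^ (k+2) * Rpower (1 - y * sin t ^ 2) (b - 1))).
  { intros y t Hy. apply is_derive_unique. apply is_derive_integrand. auto. }
  assert (H : is_derive (fun x0 => RInt (fun t => f x0 t) 0 (PI/2)) c
             (RInt (fun t => Derive (fun u => f u t) c) 0 (PI/2))).
  { apply is_derive_RInt_param.
    - apply (filter_imp (fun y => y < 1)); [|apply locally_lt1; auto].
      intros y Hy t _. eexists. apply is_derive_integrand. auto.
    - intros t _.
      apply (continuity_2d_pt_ext_loc
        (fun u v => - b * (sin v ^ (k+2) * Rpower (1 - u * sin v ^ 2) (b - 1)))).
      + assert (Hp : 0 < 1 - c) by lra.
        exists (mkposreal _ Hp). intros u v Hu _. simpl in Hu.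
        rewrite HD; auto. apply Rabs_lt_between' in Hu. lra.
      + apply continuity_2d_pt_mult. apply continuity_2d_pt_const.
        apply cont2d_integrand; auto.
    - apply (filter_imp (fun y => y < 1)); [|apply locally_lt1; auto].
      intros y Hy. apply ex_RInt_J. auto. }
  replace (- b * RInt (fun u : R => sin u ^ (k + 2) * Rpower (1 - c * sin u ^ 2) (b - 1)) 0 (PI / 2))
    with (RInt (fun t => Derive (fun u => f u t) c) 0 (PI/2)).
  exact H.
  rewrite (RInt_ext _ (fun t => scal (- b) (sin t ^ (k+2) * Rpower (1 - c * sin t ^ 2) (b - 1)))).
  - rewrite (RInt_scal (V:=R_CompleteNormedModule)). reflexivity. apply ex_RInt_J. auto.
  - intros t _. rewrite HD; auto.
Qed.

Lemma Rpow_half R : 0 < R -> Rpower R (1/2) = sqrt R.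
Proof. intros H. replace (1/2) with (/2) by field. apply Rpower_sqrt; auto. Qed.

Lemma Rpow_shift R b : 0 < R -> Rpower R (b + 1) = Rpower R b * R.
Proof. intros H. rewrite Rpower_plus, Rpower_1; auto. Qed.

Lemma Rpow_32 R : 0 < R -> Rpower R (3/2) = R * sqrt R.
Proof. intros H. replace (3/2) with (1/2 + 1) by field. rewrite Rpow_shift, Rpow_half; auto; ring. Qed.

Lemma Rpow_m12 R : 0 < R -> Rpower R (-1/2) = / sqrt R.
Proof. intros H. replace (-1/2) with (- (1/2)) by field. rewrite Rpower_Ropp, Rpow_half; auto. Qed.

Lemma Rpow_m32 R : 0 < R -> Rpower R (-3/2) = / (R * sqrt R).
Proof. intros H. replace (-3/2) with (- (3/2)) by field. rewrite Rpower_Ropp, Rpow_32; auto. Qed.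

Lemma Rpow_m52 R : 0 < R -> Rpower R (-5/2) = / (R * R * sqrt R).
Proof. intros H. replace (-5/2) with (- (3/2 + 1)) by field. rewrite Rpower_Ropp, Rpow_shift, Rpow_32; auto.
  f_equal. ring. Qed.

Lemma RInt_Rmult (f : R -> R) a b l : ex_RInt f a b -> RInt (fun x => l * f x) a b = l * RInt f a b.
Proof. intros H. apply (RInt_scal (V:=R_CompleteNormedModule) f a b l H). Qed.
Lemma RInt_Rplus (f g : R -> R) a b : ex_RInt f a b -> ex_RInt g a b ->
  RInt (fun x => f x + g x) a b = RInt f a b + RInt g a b.
Proof. intros H1 H2. apply (RInt_plus (V:=R_CompleteNormedModule) f g a b H1 H2). Qed.
Lemma RInt_Rminus (f g : R -> R) a b : ex_RInt f a b -> ex_RInt g a b ->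
  RInt (fun x => f x - g x) a b = RInt f a b - RInt g a b.
Proof. intros H1 H2. apply (RInt_minus (V:=R_CompleteNormedModule) f g a b H1 H2). Qed.

Lemma RInt_extR (f g : R -> R) a b : (forall x, Rmin a b < x < Rmax a b -> f x = g x) -> RInt f a b = RInt g a b.
Proof. intros H. apply (RInt_ext (V:=R_CompleteNormedModule)). exact H. Qed.

Definition S k := RInt (fun u => sin u ^ k) 0 (PI/2).

Lemma ex_RInt_sinpow k : ex_RInt (fun u => sin u ^ k) 0 (PI/2).
Proof. apply (ex_RInt_continuous (V:=R_CompleteNormedModule)). intros; apply cont_sinpow. Qed.

Lemma PI2_pos : 0 < PI/2.
Proof. pose proof PI_RGT_0. lra. Qed.

Lemma S0 : S 0 = PI/2.
Proof. unfold S. rewrite (RInt_ext _ (fun _ => 1)). rewrite RInt_const.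
  unfold scal; simpl; unfold mult; simpl. ring. intros; simpl; ring. Qed.

Lemma S_red k : (k = 0 \/ k = 2 \/ k = 4)%nat -> INR (k+1) * S k = INR (k+2) * S (k+2).
Proof.
  intros Hk.
  assert (H : is_RInt (fun u => INR (k+1) * sin u ^ k - INR (k+2) * sin u ^ (k+2)) 0 (PI/2)
      (minus ((fun u => sin u ^ (k+1) * cos u) (PI/2)) ((fun u => sin u ^ (k+1) * cos u) 0))).
  { apply (is_RInt_derive (V:=R_CompleteNormedModule) (fun u => sin u ^ (k+1) * cos u)).
    - intros x _. destruct Hk as [ -> | [ -> | -> ] ]; simpl; auto_derive; auto;
      pose proof (sin2_cos2 x); unfold Rsqr in *; simpl; nra.
    - intros x _. apply (ex_derive_continuous (K:=R_AbsRing) (V:=R_NormedModule)).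
      destruct Hk as [ -> | [ -> | -> ] ]; simpl; auto_derive; auto. }
  apply (is_RInt_unique (V:=R_CompleteNormedModule)) in H. cbv beta in H. rewrite cos_PI2, sin_0 in H.
  rewrite RInt_Rminus in H.
  2,3: apply (ex_RInt_continuous (V:=R_CompleteNormedModule)); intros;
       apply (ex_derive_continuous (K:=R_AbsRing) (V:=R_NormedModule)); auto_derive; auto.
  rewrite (RInt_Rmult (fun u => sin u ^ k)) in H by apply ex_RInt_sinpow.
  rewrite (RInt_Rmult (fun u => sin u ^ (k+2))) in H by apply ex_RInt_sinpow.
  unfold S. rewrite cos_0 in H. rewrite (pow_i (k+1)) in H by lia.
  unfold minus, plus, opp in H; simpl in H. lra.
Qed.

Lemma S2 : S 2 = PI/4.
Proof. pose proof (S_red 0 ltac:(lia)). rewrite S0 in H. simpl in H. lra. Qed.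
Lemma S4 : S 4 = 3*PI/16.
Proof. pose proof (S_red 2 ltac:(lia)). rewrite S2 in H. simpl in H. lra. Qed.
Lemma S6 : S 6 = 5*PI/32.
Proof. pose proof (S_red 4 ltac:(lia)). rewrite S4 in H. simpl in H. lra. Qed.

Definition ig k b c u := sin u ^ k * Rpower (1 - c * sin u ^ 2) b.

Lemma cont_comb3 a1 a2 a3 k1 k2 k3 b1 b2 b3 c z : c < 1 ->
  continuous (fun u => a1 * ig k1 b1 c u + a2 * ig k2 b2 c u + a3 * ig k3 b3 c u) z.
Proof.
  intros Hc. unfold ig.
  apply (continuous_plus (fun u => a1 * ig k1 b1 c u + a2 * ig k2 b2 c u) (fun u => a3 * ig k3 b3 c u)).
  apply (continuous_plus (fun u => a1 * ig k1 b1 c u) (fun u => a2 * ig k2 b2 c u)).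
  all: apply (continuous_mult (fun _ => _) (fun u => ig _ _ c u)); [apply continuous_const| apply cont_integrand; auto].
Qed.

Lemma ex_ig k b c : c < 1 -> ex_RInt (ig k b c) 0 (PI/2).
Proof. intros; apply ex_RInt_J; auto. Qed.

Lemma RInt_comb3 a1 a2 a3 k1 k2 k3 b1 b2 b3 c : c < 1 ->
  RInt (fun u => a1 * ig k1 b1 c u + a2 * ig k2 b2 c u + a3 * ig k3 b3 c u) 0 (PI/2)
  = a1 * J k1 b1 c + a2 * J k2 b2 c + a3 * J k3 b3 c.
Proof.
  intros Hc.
  assert (E : forall k b a, ex_RInt (fun u => a * ig k b c u) 0 (PI/2)).
  { intros. apply (ex_RInt_scal (V:=R_CompleteNormedModule)). apply ex_ig; auto. }
  rewrite RInt_Rplus; auto.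
  rewrite RInt_Rplus; auto.
  rewrite !RInt_Rmult; try apply ex_ig; auto.
  apply (ex_RInt_plus (V:=R_CompleteNormedModule)); auto.
Qed.

Ltac fin_id c x :=
  repeat match goal with |- context[sqrt ?a] => progress replace a with (1 - c * sin x ^2) by ring end;
  let HR2 := fresh in assert (HR2 : 0 < 1 - c * sin x ^ 2) by (apply Rpos_lt1; lra);
  let Hr := fresh in assert (Hr : sqrt (1 - c * sin x ^2) * sqrt (1 - c * sin x ^2) = 1 - c * sin x ^2) by (apply sqrt_sqrt; lra);
  let Hr0 := fresh in assert (Hr0 : 0 < sqrt (1 - c * sin x ^2)) by (apply sqrt_lt_R0; lra);
  let Hsc := fresh in assert (Hsc : sin x ^2 + cos x ^2 = 1) by (rewrite <- (sin2_cos2 x); unfold Rsqr; ring);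
  generalize dependent (sqrt (1 - c * sin x ^2)); intros;
  generalize dependent (sin x); generalize dependent (cos x); intros;
  match goal with |- ?a = ?b => change (@eq R a b) end;
  field_simplify_eq; [ cbn [pow] in *; nsatz | .. ]; try nra.



Lemma ODE1 c : c < 1 -> c*(1-c) * J 4 (-1/2) c + (-2) * J 2 (1/2) c + 1 * J 0 (3/2) c = 0.
Proof.
  intros Hc.
  assert (H : is_RInt (fun u => c*(1-c) * ig 4 (-1/2) c u + (-2) * ig 2 (1/2) c u + 1 * ig 0 (3/2) c u) 0 (PI/2)
     (minus ((fun u => sin u * cos u * sqrt (1 - c * sin u ^ 2)) (PI/2))
            ((fun u => sin u * cos u * sqrt (1 - c * sin u ^ 2)) 0))).
  { apply (is_RInt_derive (V:=R_CompleteNormedModule) (fun u => sin u * cos u * sqrt (1 - c * sin u ^ 2))).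
    - intros x _. pose proof (Rpos_lt1 c x Hc) as HR. unfold ig.
      auto_derive. lra.
      rewrite Rpow_m12, Rpow_half, Rpow_32 by lra.
      fin_id c x.
    - intros x _. apply cont_comb3; auto. }
  apply (is_RInt_unique (V:=R_CompleteNormedModule)) in H. cbv beta in H.
  rewrite RInt_comb3 in H by auto.
  rewrite cos_PI2, sin_0 in H.
  unfold minus, plus, opp in H; simpl in H. lra.
Qed.

Lemma ODE2 c : c < 1 -> 3*c*(1-c) * J 8 (-5/2) c + 2*(3-4*c) * J 6 (-3/2) c + (-5) * J 4 (-1/2) c = 0.
Proof.
  intros Hc.
  assert (H : is_RInt (fun u => 3*c*(1-c) * ig 8 (-5/2) c u + 2*(3-4*c) * ig 6 (-3/2) c u + (-5) * ig 4 (-1/2) c u) 0 (PI/2)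
     (minus ((fun u => - (sin u ^ 5 * cos u) / ((1 - c * sin u ^ 2) * sqrt (1 - c * sin u ^ 2))) (PI/2))
            ((fun u => - (sin u ^ 5 * cos u) / ((1 - c * sin u ^ 2) * sqrt (1 - c * sin u ^ 2))) 0))).
  { apply (is_RInt_derive (V:=R_CompleteNormedModule) (fun u => - (sin u ^ 5 * cos u) / ((1 - c * sin u ^ 2) * sqrt (1 - c * sin u ^ 2)))).
    - intros x _. pose proof (Rpos_lt1 c x Hc) as HR. unfold ig.
      auto_derive. split. lra. split. apply Rgt_not_eq. apply Rmult_lt_0_compat. lra. apply sqrt_lt_R0. lra. auto.
      rewrite Rpow_m12, Rpow_m32, Rpow_m52 by lra.
      fin_id c x.
    - intros x _. apply cont_comb3; auto. }
  apply (is_RInt_unique (V:=R_CompleteNormedModule)) in H. cbv beta in H.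
  rewrite RInt_comb3 in H by auto.
  rewrite cos_PI2, sin_0 in H.
  unfold minus, plus, opp in H; simpl in H.
  replace (- (0 * (0 * (0 * (0 * (0 * 1)))) * 1) / ((1 - c * (0 * (0 * 1))) * sqrt (1 - c * (0 * (0 * 1))))) with 0 in H by (unfold Rdiv; ring).
  replace (- (sin (PI / 2) * (sin (PI / 2) * (sin (PI / 2) * (sin (PI / 2) * (sin (PI / 2) * 1)))) * 0) /
      ((1 - c * (sin (PI / 2) * (sin (PI / 2) * 1))) * sqrt (1 - c * (sin (PI / 2) * (sin (PI / 2) * 1))))) with 0 in H by (unfold Rdiv; ring).
  lra.
Qed.

Lemma is_derive_J_comp k b (g : R -> R) dg x : g x < 1 -> is_derive g x dg ->
  is_derive (fun y => J k b (g y)) x (dg * (-b * J (k+2) (b-1) (g x))).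
Proof.
  intros Hg Hd.
  apply (is_derive_comp (J k b) g x (-b * J (k+2) (b-1) (g x)) dg).
  - apply J_deriv; auto.
  - auto.
Qed.

Lemma dprod (h : R -> R) dh k b (g : R -> R) dg x : g x < 1 -> is_derive h x dh -> is_derive g x dg ->
  is_derive (fun y => h y * J k b (g y)) x (dh * J k b (g x) + h x * (dg * (-b * J (k+2) (b-1) (g x)))).
Proof.
  intros Hg Hh Hd.
  apply (is_derive_mult h (fun y => J k b (g y)) x dh); auto.
  apply is_derive_J_comp; auto.
  intros; apply Rmult_comm.
Qed.

Lemma inv_sq_lt1 x : 1 < x -> / x ^ 2 < 1.
Proof. intros H. rewrite <- Rinv_1. apply Rinv_lt_contravar. nra. nra. Qed.
Lemma n_lt1 x : x <> 0 -> 1 - / x ^ 2 < 1.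
Proof. intros H. assert (0 < / x^2). { apply Rinv_0_lt_compat. apply pow2_gt_0; auto. } lra. Qed.

Lemma psi1_eq x : 1 < x -> psi1 x = 3/2 * J 0 (3/2) (/ x ^ 2).
Proof.
  intros Hx. unfold psi1, J. f_equal. apply RInt_extR. intros u _.
  pose proof (Rpos_lt1 (/ x^2) u (inv_sq_lt1 x Hx)).
  rewrite Rpow_32 by lra. rewrite pow_O.
  replace (sin u ^ 2 / x ^ 2) with (/ x ^ 2 * sin u ^ 2) by (field; lra). ring.
Qed.

Lemma psi2_eq x : x <> 0 -> psi2 x = 3/2 * (1 - / x ^ 2) ^ 2 * J 4 (-1/2) (1 - / x ^ 2).
Proof.
  intros Hx. unfold psi2, J. f_equal. apply RInt_extR. intros u _.
  pose proof (Rpos_lt1 (1 - / x^2) u (n_lt1 x Hx)).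
  rewrite Rpow_m12 by lra. unfold Rdiv. reflexivity.
Qed.

Definition D1f y := 9/2 / y^3 * J 2 (1/2) (/ y ^ 2).
Definition DD1f y := -27/2 / y^4 * J 2 (1/2) (/ y ^ 2) + 9/2 / y^6 * J 4 (-1/2) (/ y ^ 2).
Definition D2f y := 6 * (1 - / y^2) / y^3 * J 4 (-1/2) (1 - / y^2)
                  + 3/2 * (1 - / y^2)^2 / y^3 * J 6 (-3/2) (1 - / y^2).
Definition DD2f y :=
  6 * (2 / y^6 - 3 * (1 - / y^2) / y^4) * J 4 (-1/2) (1 - / y^2)
  + 6 * (1 - / y^2) / y^3 * (2 / y^3 * (1/2 * J 6 (-3/2) (1 - / y^2)))
  + 3/2 * (4 * (1 - / y^2) / y^6 - 3 * (1 - / y^2)^2 / y^4) * J 6 (-3/2) (1 - / y^2)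
  + 3/2 * (1 - / y^2)^2 / y^3 * (2 / y^3 * (3/2 * J 8 (-5/2) (1 - / y^2))).

Lemma locally_gt1 x : 1 < x -> locally x (fun y => 1 < y).
Proof. intros H. apply (open_gt 1 x H). Qed.

Lemma d_psi1 x : 1 < x -> is_derive psi1 x (D1f x).
Proof.
  intros Hx.
  apply (is_derive_ext_loc (fun y => 3/2 * J 0 (3/2) (/ y ^ 2))).
  { apply (filter_imp (fun y => 1 < y)); [|apply locally_gt1; auto].
    intros y Hy. symmetry. apply psi1_eq; auto. }
  assert (H := is_derive_J_comp 0 (3/2) (fun y => / y ^ 2) (- 2 / x ^ 3) x (inv_sq_lt1 x Hx)).
  assert (H' : is_derive (fun y : R => / y ^ 2) x (-2 / x ^ 3)).
  { auto_derive. nra. field. lra. }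
  specialize (H H'). apply (is_derive_scal _ _ (3/2)) in H.
  unfold D1f. replace (3/2 - 1) with (1/2) in H by field. simpl in H.
  replace (9 / 2 / x ^ 3 * J 2 (1 / 2) (/ x ^ 2)) with (3 / 2 * (-2 / x ^ 3 * (- (3 / 2) * J 2 (1 / 2) (/ x ^ 2)))).
  exact H. field. lra.
Qed.

Ltac ad := auto_derive; repeat split; try (apply pow_nonzero); try (repeat (apply Rmult_integral_contrapositive_currified); auto; try apply R1_neq_R0); auto; try (field; auto).

Lemma is_derive_eqv (f : R -> R) x v w : is_derive f x v -> v = w -> is_derive f x w.
Proof. intros H <-. exact H. Qed.

Lemma d_inv2 x : x <> 0 -> is_derive (fun y : R => / y ^ 2) x (-2 / x ^ 3).
Proof. intros Hx. ad. Qed.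
Lemma d_n x : x <> 0 -> is_derive (fun y : R => 1 - / y ^ 2) x (2 / x ^ 3).
Proof. intros Hx. ad. Qed.

Lemma d_D1 x : 1 < x -> is_derive D1f x (DD1f x).
Proof.
  intros Hx. assert (Hx0 : x <> 0) by lra.
  assert (H := dprod (fun y => 9/2 / y^3) (-27/2 / x^4) 2 (1/2) (fun y => / y^2) (-2 / x^3) x
     (inv_sq_lt1 x Hx) ltac:(ad) (d_inv2 x Hx0)).
  apply (is_derive_eqv _ _ _ _ H). unfold DD1f. replace (1/2 - 1) with (-1/2) by field. simpl.
  field. auto.
Qed.

Lemma d_psi2 x : 1 < x -> is_derive psi2 x (D2f x).
Proof.
  intros Hx. assert (Hx0 : x <> 0) by lra.
  apply (is_derive_ext_loc (fun y => 3/2 * (1 - / y ^ 2) ^ 2 * J 4 (-1/2) (1 - / y ^ 2))).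
  { apply (filter_imp (fun y => 1 < y)); [|apply locally_gt1; auto].
    intros y Hy. symmetry. apply psi2_eq; lra. }
  assert (H := dprod (fun y => 3/2 * (1 - / y ^ 2) ^ 2) (6 * (1 - / x^2) / x^3) 4 (-1/2) (fun y => 1 - / y^2) (2 / x^3) x
     (n_lt1 x Hx0) ltac:(ad) (d_n x Hx0)).
  apply (is_derive_eqv _ _ _ _ H). unfold D2f. replace (-1/2 - 1) with (-3/2) by field. simpl.
  field. auto.
Qed.

Lemma d_D2 x : 1 < x -> is_derive D2f x (DD2f x).
Proof.
  intros Hx. assert (Hx0 : x <> 0) by lra.
  assert (H1 := dprod (fun y => 6 * (1 - / y^2) / y^3) (6 * (2 / x^6 - 3 * (1 - / x^2) / x^4)) 4 (-1/2) (fun y => 1 - / y^2) (2 / x^3) x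
     (n_lt1 x Hx0) ltac:(ad) (d_n x Hx0)).
  assert (H2 := dprod (fun y => 3/2 * (1 - / y^2)^2 / y^3) (3/2 * (4 * (1 - / x^2) / x^6 - 3 * (1 - / x^2)^2 / x^4)) 6 (-3/2) (fun y => 1 - / y^2) (2 / x^3) x
     (n_lt1 x Hx0) ltac:(ad) (d_n x Hx0)).
  assert (H := is_derive_plus _ _ x _ _ H1 H2).
  apply (is_derive_eqv _ _ _ _ H). unfold DD2f. replace (-1/2 - 1) with (-3/2) by field.
  replace (-3/2 - 1) with (-5/2) by field. simpl.
  unfold plus; simpl. field. auto.
Qed.

Lemma Derive_psi1 y : 1 < y -> Derive psi1 y = D1f y.
Proof. intros; apply is_derive_unique, d_psi1; auto. Qed.
Lemma Derive_psi2 y : 1 < y -> Derive psi2 y = D2f y.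
Proof. intros; apply is_derive_unique, d_psi2; auto. Qed.

Lemma dd_psi1 x : 1 < x -> is_derive (Derive psi1) x (DD1f x).
Proof.
  intros Hx. apply (is_derive_ext_loc D1f).
  { apply (filter_imp (fun y => 1 < y)); [|apply locally_gt1; auto].
    intros y Hy. symmetry. apply Derive_psi1; auto. }
  apply d_D1; auto.
Qed.
Lemma dd_psi2 x : 1 < x -> is_derive (Derive psi2) x (DD2f x).
Proof.
  intros Hx. apply (is_derive_ext_loc D2f).
  { apply (filter_imp (fun y => 1 < y)); [|apply locally_gt1; auto].
    intros y Hy. symmetry. apply Derive_psi2; auto. }
  apply d_D2; auto.
Qed.

Lemma RInt_lin2 a b k m : RInt (fun u => a * sin u ^ k + b * sin u ^ m) 0 (PI/2) = a * S k + b * S m.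
Proof.
  rewrite RInt_Rplus. rewrite !RInt_Rmult; try apply ex_RInt_sinpow. reflexivity.
  all: apply (ex_RInt_scal (V:=R_CompleteNormedModule)); apply ex_RInt_sinpow.
Qed.

Lemma RInt_lin1 a k : RInt (fun u => a * sin u ^ k) 0 (PI/2) = a * S k.
Proof. rewrite RInt_Rmult; try apply ex_RInt_sinpow. reflexivity. Qed.

Lemma ex_lin2 a b k m : ex_RInt (fun u => a * sin u ^ k + b * sin u ^ m) 0 (PI/2).
Proof. apply (ex_RInt_plus (V:=R_CompleteNormedModule));
  apply (ex_RInt_scal (V:=R_CompleteNormedModule)); apply ex_RInt_sinpow. Qed.
Lemma ex_lin1 a k : ex_RInt (fun u => a * sin u ^ k) 0 (PI/2).
Proof. apply (ex_RInt_scal (V:=R_CompleteNormedModule)); apply ex_RInt_sinpow. Qed.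

Lemma RInt_le0 (f g : R -> R) : ex_RInt f 0 (PI/2) -> ex_RInt g 0 (PI/2) ->
  (forall u, f u <= g u) -> RInt f 0 (PI/2) <= RInt g 0 (PI/2).
Proof. intros. apply RInt_le; auto. pose proof PI2_pos; lra. Qed.

Lemma sqrt_facts c u : c < 1 ->
  let r := sqrt (1 - c * sin u ^ 2) in 0 < r /\ r * r = 1 - c * sin u ^ 2.
Proof. intros Hc r. pose proof (Rpos_lt1 c u Hc). split. apply sqrt_lt_R0; lra. apply sqrt_sqrt; lra. Qed.

Lemma sq_ge1 a : 0 <= a -> 1 <= a * a -> 1 <= a.
Proof. intros. destruct (Rle_dec 1 a); auto. assert (a * a < 1 * 1) by (apply Rmult_le_0_lt_compat; lra). lra. Qed.

Lemma Mr_ge1 c M u r : 0 <= c < 1 -> 0 < M -> 1 <= M * M * (1 - c) -> 0 < r -> r * r = 1 - c * sin u ^ 2 -> 1 <= M * r.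
Proof.
  intros Hc HM HMc Hr H2. pose proof (sin2_bounds u).
  apply sq_ge1. nra.
  assert (E : (M*r)*(M*r) = M*M*(1 - c*sin u^2)) by (rewrite <- H2; ring).
  assert (0 <= M*M*(c*(1 - sin u^2))) by (apply Rmult_le_pos; [nra| apply Rmult_le_pos; lra]).
  lra.
Qed.

Lemma B1 c : 0 <= c < 1 -> 1 * S 0 + (- (3/2) * c) * S 2 <= J 0 (3/2) c.
Proof.
  intros Hc. rewrite <- RInt_lin2. unfold J. apply RInt_le0. apply ex_lin2. apply ex_RInt_J; lra.
  intros u. rewrite Rpow_32 by (apply Rpos_lt1; lra).
  destruct (sqrt_facts c u ltac:(lra)) as [H1 H2]. revert H1 H2.
  generalize (sqrt (1 - c * sin u ^ 2)). intros r H1 H2.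
  rewrite pow_O. rewrite <- H2. pose proof (Rmult_le_pos _ _ (pow2_ge_0 (r-1)) (ltac:(lra) : 0 <= 2*r+1)). nra.
Qed.

Lemma B2 c : c < 1 -> J 2 (1/2) c <= 1 * S 2 + (- c / 2) * S 4.
Proof.
  intros Hc. rewrite <- RInt_lin2. unfold J. apply RInt_le0. apply ex_RInt_J; lra. apply ex_lin2.
  intros u. rewrite Rpow_half by (apply Rpos_lt1; lra).
  destruct (sqrt_facts c u ltac:(lra)) as [H1 H2]. revert H1 H2.
  generalize (sqrt (1 - c * sin u ^ 2)). intros r H1 H2.
  pose proof (sin2_bounds u).
  replace (sin u ^ 4) with (sin u ^ 2 * sin u ^ 2) by ring.
  assert (r <= (1 + r * r) / 2) by (pose proof (Rle_0_sqr (r - 1)); unfold Rsqr in *; nra). assert (Hq : 0 <= 1 - c * sin u ^ 2 / 2 - r) by lra. pose proof (Rmult_le_pos _ _ (proj1 H) Hq). lra.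
Qed.

Lemma B2pos c : c < 1 -> 0 <= J 2 (1/2) c.
Proof.
  intros Hc. replace 0 with (0 * S 0) by ring. rewrite <- RInt_lin1. unfold J. apply RInt_le0. apply ex_lin1. apply ex_RInt_J; lra.
  intros u. rewrite Rpow_half by (apply Rpos_lt1; lra).
  pose proof (sin2_bounds u). pose proof (sqrt_pos (1 - c * sin u ^ 2)). nra.
Qed.

Lemma B4 c M : 0 <= c < 1 -> 0 < M -> 1 <= M * M * (1 - c) ->
  1 * S 4 <= J 4 (-1/2) c <= M * S 4.
Proof.
  intros Hc HM HMc. split.
  - rewrite <- RInt_lin1. unfold J. apply RInt_le0. apply ex_lin1. apply ex_RInt_J; lra.
    intros u. rewrite Rpow_m12 by (apply Rpos_lt1; lra).
    destruct (sqrt_facts c u ltac:(lra)) as [H1 H2]. revert H1 H2.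
    generalize (sqrt (1 - c * sin u ^ 2)). intros r H1 H2.
    pose proof (sin2_bounds u). assert (Hw : 0 <= sin u ^ 4) by (replace (sin u ^4) with ((sin u^2)^2) by ring; apply pow2_ge_0).
    assert (r <= 1) by nra. assert (1 <= / r). { rewrite <- Rinv_1. apply Rinv_le_contravar; lra. } nra.
  - rewrite <- RInt_lin1. unfold J. apply RInt_le0. apply ex_RInt_J; lra. apply ex_lin1.
    intros u. rewrite Rpow_m12 by (apply Rpos_lt1; lra).
    destruct (sqrt_facts c u ltac:(lra)) as [H1 H2]. revert H1 H2.
    generalize (sqrt (1 - c * sin u ^ 2)). intros r H1 H2.
    pose proof (sin2_bounds u). assert (Hw : 0 <= sin u ^ 4) by (replace (sin u ^4) with ((sin u^2)^2) by ring; apply pow2_ge_0).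
    assert (1 <= M * r) by (apply (Mr_ge1 c M u r); auto).
    assert (/ r <= M). { apply (Rmult_le_reg_r r). lra. rewrite Rinv_l by lra. lra. } nra.
Qed.

Lemma B6 c M : 0 <= c < 1 -> 0 < M -> 1 <= M * M * (1 - c) ->
  1 * S 6 <= J 6 (-3/2) c <= M^3 * S 6.
Proof.
  intros Hc HM HMc. split.
  - rewrite <- RInt_lin1. unfold J. apply RInt_le0. apply ex_lin1. apply ex_RInt_J; lra.
    intros u. rewrite Rpow_m32 by (apply Rpos_lt1; lra).
    destruct (sqrt_facts c u ltac:(lra)) as [H1 H2]. revert H1 H2.
    generalize (sqrt (1 - c * sin u ^ 2)). intros r H1 H2. rewrite <- H2.
    pose proof (sin2_bounds u). assert (Hw : 0 <= sin u ^ 6) by (replace (sin u ^6) with ((sin u^3)^2) by ring; apply pow2_ge_0).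
    assert (r <= 1) by nra. assert (1 <= / (r * r * r)). { rewrite <- Rinv_1. apply Rinv_le_contravar. apply Rmult_lt_0_compat; nra. nra. } nra.
  - rewrite <- RInt_lin1. unfold J. apply RInt_le0. apply ex_RInt_J; lra. apply ex_lin1.
    intros u. rewrite Rpow_m32 by (apply Rpos_lt1; lra).
    destruct (sqrt_facts c u ltac:(lra)) as [H1 H2]. revert H1 H2.
    generalize (sqrt (1 - c * sin u ^ 2)). intros r H1 H2. rewrite <- H2.
    pose proof (sin2_bounds u). assert (Hw : 0 <= sin u ^ 6) by (replace (sin u ^6) with ((sin u^3)^2) by ring; apply pow2_ge_0).
    assert (1 <= M * r) by (apply (Mr_ge1 c M u r); auto).
    assert (/ (r * r * r) <= M ^ 3).
    { apply (Rmult_le_reg_r (r * r * r)). apply Rmult_lt_0_compat; nra. rewrite Rinv_l by (apply Rgt_not_eq; apply Rmult_lt_0_compat; nra).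
      replace (M ^ 3 * (r * r * r)) with ((M * r) * (M * r) * (M * r)) by ring.
      assert (1 <= (M*r)*(M*r)) by nra. nra. }
    nra.
Qed.

Definition Q1 (t : R) := 3*t^4*(16*(12 - 9*t^2)^2 + 4*(9*(1-t^2)^2)^2) - (1-t^2)*((9*t^3*(8-3*t^2))^2 + (72*(1-t^2)*t^2 + 15*(1-t^2)^2)^2).

Lemma Q1_pos t : 4/7 <= t <= 1 -> 0 < Q1 t.
Proof.
  intros Ht. unfold Q1.
  assert (E : 7355827511386641 * (3*t^4*(16*(12 - 9*t^2)^2 + 4*(9*(1-t^2)^2)^2) - (1-t^2)*((9*t^3*(8-3*t^2))^2 + (72*(1-t^2)*t^2 + 15*(1-t^2)^2)^2)) - 20732457427248735 = 0 * ((7*t-4)^0 * (7-7*t)^12) + 9957580811640 * ((7*t-4)^1 * (7-7*t)^11) + 113700528136629 * ((7*t-4)^2 * (7-7*t)^10) + 581579530589610 * ((7*t-4)^3 * (7-7*t)^9) + 1755558425081475 * ((7*t-4)^4 * (7-7*t)^8) + 3467353368654504 * ((7*t-4)^5 * (7-7*t)^7) + 4693590890990316 * ((7*t-4)^6 * (7-7*t)^6) + 4432004759694456 * ((7*t-4)^7 * (7-7*t)^5) + 2912717228378895 * ((7*t-4)^8 * (7-7*t)^4) + 1305193650862500 * ((7*t-4)^9 * (7-7*t)^3) + 382343792989977 * ((7*t-4)^10 * (7-7*t)^2) + 67761495277938 * ((7*t-4)^11 * (7-7*t)^1) + 5940424294497 * ((7*t-4)^12 * (7-7*t)^0)) by 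ring.
  set (u := 7*t-4) in E. set (w := 7-7*t) in E.
  assert (0 <= u) by (unfold u; lra). assert (0 <= w) by (unfold w; lra).
  clearbody u w.
  assert (0 <= u^0 * w^12) by (apply Rmult_le_pos; apply pow_le; lra).
  assert (0 <= u^1 * w^11) by (apply Rmult_le_pos; apply pow_le; lra).
  assert (0 <= u^2 * w^10) by (apply Rmult_le_pos; apply pow_le; lra).
  assert (0 <= u^3 * w^9) by (apply Rmult_le_pos; apply pow_le; lra).
  assert (0 <= u^4 * w^8) by (apply Rmult_le_pos; apply pow_le; lra).
  assert (0 <= u^5 * w^7) by (apply Rmult_le_pos; apply pow_le; lra).
  assert (0 <= u^6 * w^6) by (apply Rmult_le_pos; apply pow_le; lra).
  assert (0 <= u^7 * w^5) by (apply Rmult_le_pos; apply pow_le; lra).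
  assert (0 <= u^8 * w^4) by (apply Rmult_le_pos; apply pow_le; lra).
  assert (0 <= u^9 * w^3) by (apply Rmult_le_pos; apply pow_le; lra).
  assert (0 <= u^10 * w^2) by (apply Rmult_le_pos; apply pow_le; lra).
  assert (0 <= u^11 * w^1) by (apply Rmult_le_pos; apply pow_le; lra).
  assert (0 <= u^12 * w^0) by (apply Rmult_le_pos; apply pow_le; lra).
  lra.
Qed.

Definition Q2 (t : R) := 2*(3*t^3*(24 + 5*(1-t^2)))*(12 - 9*t^2)*t - 9*(9*t^3*(8-3*t^2))*(1-t^2).

Lemma Q2_pos t : 4/7 <= t <= 1 -> 0 < Q2 t.
Proof.
  intros Ht. unfold Q2.
  assert (E : 37822859361 * (2*(3*t^3*(24 + 5*(1-t^2)))*(12 - 9*t^2)*t - 9*(9*t^3*(8-3*t^2))*(1-t^2)) - 3297553141248 = 0 * ((7*t-4)^0 * (7-7*t)^8) + 1675817856 * ((7*t-4)^1 * (7-7*t)^7) + 13334237280 * ((7*t-4)^2 * (7-7*t)^6) + 44750148408 * ((7*t-4)^3 * (7-7*t)^5) + 81540627588 * ((7*t-4)^4 * (7-7*t)^4) + 86312284695 * ((7*t-4)^5 * (7-7*t)^3) + 52357848795 * ((7*t-4)^6 * (7-7*t)^2) + 16480486098 * ((7*t-4)^7 * (7-7*t)^1) + 1987794864 * ((7*t-4)^8 * (7-7*t)^0)) by ring.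
  set (u := 7*t-4) in E. set (w := 7-7*t) in E.
  assert (0 <= u) by (unfold u; lra). assert (0 <= w) by (unfold w; lra).
  clearbody u w.
  assert (0 <= u^0 * w^8) by (apply Rmult_le_pos; apply pow_le; lra).
  assert (0 <= u^1 * w^7) by (apply Rmult_le_pos; apply pow_le; lra).
  assert (0 <= u^2 * w^6) by (apply Rmult_le_pos; apply pow_le; lra).
  assert (0 <= u^3 * w^5) by (apply Rmult_le_pos; apply pow_le; lra).
  assert (0 <= u^4 * w^4) by (apply Rmult_le_pos; apply pow_le; lra).
  assert (0 <= u^5 * w^3) by (apply Rmult_le_pos; apply pow_le; lra).
  assert (0 <= u^6 * w^2) by (apply Rmult_le_pos; apply pow_le; lra).
  assert (0 <= u^7 * w^1) by (apply Rmult_le_pos; apply pow_le; lra).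
  assert (0 <= u^8 * w^0) by (apply Rmult_le_pos; apply pow_le; lra).
  lra.
Qed.

Lemma ident z : 1 < z ->
  let p1 := psi1 z in let p2 := psi2 z in
  let d1 := D1f z in let d2 := D2f z in let dd1 := DD1f z in let dd2 := DD2f z in
  (dd2 * p1 - dd1 * p2) * (d2 * p2 + d1 * p1) - (d2 * p1 - d1 * p2) * (dd2 * p2 + d2 * d2 + dd1 * p1 + d1 * d1)
  = (d2 * p1 - d1 * p2) * (3 / (z^2 * (z^2 - 1)) * (p1 * p1 + p2 * p2) - (d1 * d1 + d2 * d2)).
Proof.
  intros Hz p1 p2 d1 d2 dd1 dd2.
  assert (Hz0 : z <> 0) by lra.
  pose proof (ODE1 (/ z^2) (inv_sq_lt1 z Hz)) as O1.
  pose proof (ODE2 (1 - / z^2) (n_lt1 z Hz0)) as O2.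
  unfold p1, p2, d1, d2, dd1, dd2, D1f, D2f, DD1f, DD2f.
  rewrite psi1_eq, psi2_eq by lra.
  set (a0 := J 0 (3/2) (/ z^2)) in *. set (a2 := J 2 (1/2) (/ z^2)) in *.
  set (a4 := J 4 (-1/2) (/ z^2)) in *.
  set (f4 := J 4 (-1/2) (1 - / z^2)) in *. set (f6 := J 6 (-3/2) (1 - / z^2)) in *.
  set (f8 := J 8 (-5/2) (1 - / z^2)) in *.
  assert (Hn : 1 - / z^2 <> 0).
  { assert (/ z^2 < 1) by (apply inv_sq_lt1; auto). lra. }
  assert (Hs : / z^2 <> 0) by (apply Rinv_neq_0_compat; apply pow_nonzero; auto).
  assert (Hz1 : z^2 - 1 <> 0) by nra.
  replace a0 with (2 * a2 - / z^2 * (1 - / z^2) * a4) by lra.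
  replace f8 with ((5 * f4 - 2 * (3 - 4 * (1 - / z^2)) * f6) / (3 * (1 - / z^2) * (1 - (1 - / z^2)))).
  2:{ assert (O2' : 3*(1 - /z^2)*(1 - (1 - /z^2)) * f8 = 5 * f4 - 2*(3 - 4*(1 - /z^2))*f6) by lra.
       rewrite <- O2'. field. repeat split; auto. replace (z^2 - (z^2-1)) with 1 by ring. apply R1_neq_R0. }
  field. repeat split; auto. replace (z^2 - (z^2-1)) with 1 by ring. apply R1_neq_R0.
Qed.

Lemma sq_le_sq a b : 0 <= a <= b -> a * a <= b * b.
Proof. intros. apply Rmult_le_compat; lra. Qed.

Lemma final_ineq t p1 d1 p2 d2 : 4/7 <= t < 1 ->
  PI * (12 - 9*t^2) <= 16 * p1 ->
  0 <= d1 -> 64 * d1 <= PI * (9*t^3*(8-3*t^2)) ->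
  PI * (9*(1-t^2)^2) <= 32 * p2 -> 32 * p2 * t <= PI * (9*(1-t^2)^2) ->
  PI * (3*t^3*(1-t^2)*(24 + 5*(1-t^2))) <= 64 * d2 ->
  64 * d2 <= PI * (72*(1-t^2)*t^2 + 15*(1-t^2)^2) ->
  0 < d2 * p1 - d1 * p2 /\ 0 < 3 * t^4 * (p1*p1 + p2*p2) - (1 - t^2) * (d1*d1 + d2*d2).
Proof.
  intros Ht H1 H2 H3 H4 H5 H6 H7.
  pose proof PI_RGT_0 as Hpi.
  assert (Hn : 0 < 1 - t^2) by nra.
  assert (Ht3 : 0 < t^3) by (apply pow_lt; lra).
  assert (Ht4 : 0 < t^4) by (apply pow_lt; lra).
  assert (HA : 0 <= PI * (12 - 9*t^2)) by (apply Rmult_le_pos; nra).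
  assert (HC : 0 <= PI * (9*(1-t^2)^2)) by (apply Rmult_le_pos; nra).
  assert (HDl : 0 <= PI * (3*t^3*(1-t^2)*(24 + 5*(1-t^2)))) by (apply Rmult_le_pos; [lra|]; apply Rmult_le_pos; nra).
  split.
  -
    pose proof (Q2_pos t ltac:(lra)) as Q.
    assert (E1 : PI * (3*t^3*(1-t^2)*(24 + 5*(1-t^2))) * (PI * (12 - 9*t^2)) <= (64*d2) * (16*p1))
      by (apply Rmult_le_compat; lra).
    assert (E2 : (64*d1) * (32*p2 * t) <= PI * (9*t^3*(8-3*t^2)) * (PI * (9*(1-t^2)^2))).
    { apply Rmult_le_compat; [lra | apply Rmult_le_pos; lra | lra | lra]. }
    assert (E3 : 0 < PI * PI * (1 - t^2) * Q2 t).
    { apply Rmult_lt_0_compat; auto. apply Rmult_lt_0_compat; auto. apply Rmult_lt_0_compat; auto. }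
    assert (E4 : 0 < 2 * (64*d2) * (16*p1) * t - (64*d1) * (32*p2 * t)).
    { unfold Q2 in E3. nra. }
    assert (0 < (d2 * p1 - d1 * p2) * t).
    { nra. }
    nra.
  - pose proof (Q1_pos t ltac:(lra)) as Q.
    assert (Ea : PI * (12 - 9*t^2) * (PI * (12 - 9*t^2)) <= (16*p1) * (16*p1)) by (apply sq_le_sq; lra).
    assert (Ec : PI * (9*(1-t^2)^2) * (PI * (9*(1-t^2)^2)) <= (32*p2) * (32*p2)) by (apply sq_le_sq; lra).
    assert (Eb : (64*d1) * (64*d1) <= PI * (9*t^3*(8-3*t^2)) * (PI * (9*t^3*(8-3*t^2)))) by (apply sq_le_sq; lra).
    assert (Ee : (64*d2) * (64*d2) <= PI * (72*(1-t^2)*t^2 + 15*(1-t^2)^2) * (PI * (72*(1-t^2)*t^2 + 15*(1-t^2)^2))) by (apply sq_le_sq; lra).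
    assert (F1 : t^4 * (PI * (12 - 9*t^2) * (PI * (12 - 9*t^2))) <= t^4 * ((16*p1) * (16*p1))) by (apply Rmult_le_compat_l; lra).
    assert (F2 : t^4 * (PI * (9*(1-t^2)^2) * (PI * (9*(1-t^2)^2))) <= t^4 * ((32*p2) * (32*p2))) by (apply Rmult_le_compat_l; lra).
    assert (F3 : (1-t^2) * ((64*d1) * (64*d1)) <= (1-t^2) * (PI * (9*t^3*(8-3*t^2)) * (PI * (9*t^3*(8-3*t^2))))) by (apply Rmult_le_compat_l; lra).
    assert (F4 : (1-t^2) * ((64*d2) * (64*d2)) <= (1-t^2) * (PI * (72*(1-t^2)*t^2 + 15*(1-t^2)^2) * (PI * (72*(1-t^2)*t^2 + 15*(1-t^2)^2)))) by (apply Rmult_le_compat_l; lra).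
    assert (E3 : 0 < PI * PI * Q1 t) by (apply Rmult_lt_0_compat; nra).
    unfold Q1 in E3.
    assert (G : 0 < 3 * t^4 * (16 * ((16*p1)*(16*p1)) + 4 * ((32*p2)*(32*p2))) - (1 - t^2) * ((64*d1)*(64*d1) + (64*d2)*(64*d2))) by lra.
    lra.
Qed.

Lemma core z : 1 < z <= 1732/1000 ->
  0 < D2f z * psi1 z - D1f z * psi2 z /\
  0 < 3 * (psi1 z * psi1 z + psi2 z * psi2 z) - z^2 * (z^2 - 1) * (D1f z * D1f z + D2f z * D2f z) /\
  0 < D2f z * psi2 z + D1f z * psi1 z.
Proof.
  intros Hz. assert (Hz0 : z <> 0) by lra.
  pose proof PI_RGT_0 as Hpi.
  set (t := / z).
  assert (Ht : 4/7 <= t < 1).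
  { unfold t. split.
    - replace (4/7) with (/ (7/4)) by field. apply Rinv_le_contravar; lra.
    - rewrite <- Rinv_1. apply Rinv_lt_contravar; lra. }
  assert (Htz : t * z = 1) by (unfold t; field; auto).
  assert (Es : / z ^ 2 = t ^ 2) by (unfold t; rewrite pow_inv; reflexivity).
  assert (Ez3 : / z ^ 3 = t ^ 3) by (unfold t; rewrite pow_inv; reflexivity).
  assert (Ht2 : 0 <= t^2 < 1) by nra. assert (Ht2p : 0 < t^2) by nra.
  assert (Ht3 : 0 < t^3) by (apply pow_lt; lra).
  pose proof (B1 (t^2) Ht2) as HB1. rewrite S0, S2 in HB1.
  assert (H1 : PI * (12 - 9*t^2) <= 16 * psi1 z).
  { rewrite psi1_eq by lra. rewrite Es. lra. }
  pose proof (B2 (t^2) ltac:(lra)) as HB2. rewrite S2, S4 in HB2.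
  pose proof (B2pos (t^2) ltac:(lra)) as HB2p.
  assert (ED1 : D1f z = 9/2 * t^3 * J 2 (1/2) (t^2)).
  { unfold D1f. rewrite Es. rewrite <- Ez3. field. auto. }
  assert (H2 : 0 <= D1f z) by (rewrite ED1; apply Rmult_le_pos; lra).
  assert (H3 : 64 * D1f z <= PI * (9*t^3*(8-3*t^2))).
  { rewrite ED1. assert (t^3 * J 2 (1/2) (t^2) <= t^3 * (1 * (PI/4) + (- t^2/2) * (3*PI/16)))
      by (apply Rmult_le_compat_l; lra). nra. }
  assert (En : 1 - / z^2 = 1 - t^2) by (rewrite Es; ring).
  assert (HM : 1 <= z * z * (1 - (1 - t^2))).
  { replace (z * z * (1 - (1 - t^2))) with ((t*z)*(t*z)) by ring. rewrite Htz. lra. }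
  pose proof (B4 (1 - t^2) z ltac:(lra) ltac:(lra) HM) as HB4. rewrite S4 in HB4.
  pose proof (B6 (1 - t^2) z ltac:(lra) ltac:(lra) HM) as HB6. rewrite S6 in HB6.
  set (f4 := J 4 (-1/2) (1 - t^2)) in *. set (f6 := J 6 (-3/2) (1 - t^2)) in *.
  assert (Ep2 : psi2 z = 3/2 * (1 - t^2)^2 * f4) by (rewrite psi2_eq, En by lra; reflexivity).
  assert (ED2 : D2f z = 6 * (1 - t^2) * t^3 * f4 + 3/2 * (1-t^2)^2 * t^3 * f6).
  { unfold D2f. rewrite En. fold f4 f6. rewrite <- Ez3. field. auto. }
  assert (Hn : 0 < 1 - t^2) by lra.
  assert (Hn2 : 0 < (1 - t^2)^2) by (apply pow_lt; lra).
  assert (H4 : PI * (9*(1-t^2)^2) <= 32 * psi2 z).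
  { rewrite Ep2. nra. }
  assert (H5 : 32 * psi2 z * t <= PI * (9*(1-t^2)^2)).
  { rewrite Ep2. assert (f4 * t <= z * (3*PI/16) * t) by (apply Rmult_le_compat_r; lra).
    replace (z * (3*PI/16) * t) with ((t*z) * (3*PI/16)) in H by ring. rewrite Htz in H.
    nra. }
  assert (Hz3t : z^3 * t^3 = 1) by (rewrite <- Rpow_mult_distr; rewrite Rmult_comm, Htz; ring).
  assert (H6 : PI * (3*t^3*(1-t^2)*(24 + 5*(1-t^2))) <= 64 * D2f z).
  { rewrite ED2.
    assert (A1 : (1 - t^2) * t^3 * (3*PI/16) <= (1 - t^2) * t^3 * f4) by (apply Rmult_le_compat_l; nra).
    assert (A2 : (1 - t^2)^2 * t^3 * (5*PI/32) <= (1 - t^2)^2 * t^3 * f6) by (apply Rmult_le_compat_l; nra).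
    nra. }
  assert (H7 : 64 * D2f z <= PI * (72*(1-t^2)*t^2 + 15*(1-t^2)^2)).
  { rewrite ED2.
    assert (A1 : (1 - t^2) * t^3 * f4 <= (1 - t^2) * t^3 * (z * (3*PI/16))) by (apply Rmult_le_compat_l; nra).
    assert (A2 : (1 - t^2)^2 * t^3 * f6 <= (1 - t^2)^2 * t^3 * (z^3 * (5*PI/32))) by (apply Rmult_le_compat_l; nra).
    replace ((1 - t^2) * t^3 * (z * (3*PI/16))) with ((1 - t^2) * t^2 * (3*PI/16) * (t*z)) in A1 by ring.
    rewrite Htz, Rmult_1_r in A1.
    replace ((1 - t^2)^2 * t^3 * (z^3 * (5*PI/32))) with ((1 - t^2)^2 * (5*PI/32) * (z^3 * t^3)) in A2 by ring.
    rewrite Hz3t, Rmult_1_r in A2.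
    lra. }
  destruct (final_ineq t (psi1 z) (D1f z) (psi2 z) (D2f z) Ht H1 H2 H3 H4 H5 H6 H7) as [G1 G2].
  split; [exact G1|split].
  - assert (Hz4 : z^4 * t^4 = 1) by (rewrite <- Rpow_mult_distr; rewrite Rmult_comm, Htz; ring).
    assert (0 < z^4 * (3 * t^4 * (psi1 z * psi1 z + psi2 z * psi2 z) - (1 - t^2) * (D1f z * D1f z + D2f z * D2f z))).
    { apply Rmult_lt_0_compat; auto. apply pow_lt; lra. }
    replace (z^4 * (3 * t^4 * (psi1 z * psi1 z + psi2 z * psi2 z) - (1 - t^2) * (D1f z * D1f z + D2f z * D2f z)))
      with (3 * (z^4 * t^4) * (psi1 z * psi1 z + psi2 z * psi2 z) - z^2 * (z^2 - (z*t)^2) * (D1f z * D1f z + D2f z * D2f z)) in H by ring.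
    rewrite Hz4 in H. replace (z * t) with 1 in H by lra. lra.
  - assert (0 < psi2 z) by (rewrite Ep2; nra).
    assert (0 < D2f z) by nra.
    assert (0 < psi1 z) by nra.
    nra.
Qed.

Definition Uf y := Derive psi2 y * psi1 y - Derive psi1 y * psi2 y.
Definition Pf y := Derive psi2 y * psi2 y + Derive psi1 y * psi1 y.

Lemma Derive_phi1 y : Derive phi1 y = 4 / (3 * PI) * Derive psi1 y.
Proof. unfold phi1. apply Derive_scal. Qed.
Lemma Derive_phi2 y : Derive phi2 y = 16 / (3 * PI) * Derive psi2 y.
Proof. unfold phi2. apply Derive_scal. Qed.

Lemma PI_neq0 : PI <> 0.
Proof. pose proof PI_RGT_0; lra. Qed.

Definition kW := 16 / (3 * PI) * (4 / (3 * PI)).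
Definition kQ := (16 / (3 * PI)) ^ 2.

Lemma Wphi_eq y : Wphi y = kW * Uf y.
Proof. unfold Wphi, Uf, kW. rewrite Derive_phi1, Derive_phi2. unfold phi1, phi2. ring. Qed.
Lemma Qphi_eq y : Qphi y = kQ * Pf y.
Proof. unfold Qphi, Pf, kQ. rewrite Derive_phi1, Derive_phi2. unfold phi1, phi2. field. apply PI_neq0. Qed.

Lemma kpos : 0 < kW /\ 0 < kQ.
Proof. pose proof PI_RGT_0. unfold kW, kQ. split.
  apply Rmult_lt_0_compat; apply Rdiv_lt_0_compat; lra.
  apply pow_lt. apply Rdiv_lt_0_compat; lra. Qed.

Lemma d_Uf x : 1 < x -> is_derive Uf x (DD2f x * psi1 x - DD1f x * psi2 x).
Proof.
  intros Hx.
  assert (H := is_derive_minus _ _ x _ _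
    (is_derive_mult (Derive psi2) psi1 x _ _ (dd_psi2 x Hx) (d_psi1 x Hx) Rmult_comm)
    (is_derive_mult (Derive psi1) psi2 x _ _ (dd_psi1 x Hx) (d_psi2 x Hx) Rmult_comm)).
  apply (is_derive_eqv _ _ _ _ H).
  unfold minus, plus, opp, mult; simpl. rewrite Derive_psi1, Derive_psi2 by auto. ring.
Qed.

Lemma d_Pf x : 1 < x -> is_derive Pf x (DD2f x * psi2 x + D2f x * D2f x + DD1f x * psi1 x + D1f x * D1f x).
Proof.
  intros Hx.
  assert (H := is_derive_plus _ _ x _ _
    (is_derive_mult (Derive psi2) psi2 x _ _ (dd_psi2 x Hx) (d_psi2 x Hx) Rmult_comm)
    (is_derive_mult (Derive psi1) psi1 x _ _ (dd_psi1 x Hx) (d_psi1 x Hx) Rmult_comm)).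
  apply (is_derive_eqv _ _ _ _ H).
  unfold minus, plus, opp, mult; simpl. rewrite Derive_psi1, Derive_psi2 by auto. ring.
Qed.

Lemma key x : 1 < x <= 1732/1000 ->
  0 < Uf x /\ 0 < Pf x /\
  0 < (DD2f x * psi1 x - DD1f x * psi2 x) * Pf x - Uf x * (DD2f x * psi2 x + D2f x * D2f x + DD1f x * psi1 x + D1f x * D1f x).
Proof.
  intros Hx. destruct (core x Hx) as [C1 [C2 C3]].
  unfold Uf, Pf. rewrite Derive_psi1, Derive_psi2 by lra.
  split; [lra|split; [lra|]].
  pose proof (ident x ltac:(lra)) as I. cbv zeta in I.
  replace ((DD2f x * psi1 x - DD1f x * psi2 x) * (D2f x * psi2 x + D1f x * psi1 x) -
   (D2f x * psi1 x - D1f x * psi2 x) * (DD2f x * psi2 x + D2f x * D2f x + DD1f x * psi1 x + D1f x * D1f x))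
   with ((D2f x * psi1 x - D1f x * psi2 x) * (3 / (x^2 * (x^2 - 1)) * (psi1 x * psi1 x + psi2 x * psi2 x) - (D1f x * D1f x + D2f x * D2f x))) by (rewrite <- I; ring).
  apply Rmult_lt_0_compat; auto.
  assert (Hq : 0 < x^2 * (x^2 - 1)) by (apply Rmult_lt_0_compat; nra).
  replace (3 / (x ^ 2 * (x ^ 2 - 1)) * (psi1 x * psi1 x + psi2 x * psi2 x) - (D1f x * D1f x + D2f x * D2f x))
    with ((3 * (psi1 x * psi1 x + psi2 x * psi2 x) - x ^ 2 * (x ^ 2 - 1) * (D1f x * D1f x + D2f x * D2f x)) / (x^2 * (x^2 - 1)))
    by (field; repeat split; apply Rgt_not_eq; nra).
  apply Rdiv_lt_0_compat; auto.
Qed.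

Theorem mainTheorem12 :
  (forall x : R, 1 < x <= 1732 / 1000 -> 0 < nu x) /\
  (forall x y : R, 1 < x -> x < y -> y <= 1732 / 1000 -> mu y < mu x).
Proof.
  destruct kpos as [HkW HkQ].
  split.
  - intros x Hx. destruct (key x Hx) as [K1 [K2 K3]].
    unfold nu.
    rewrite (Derive_ext Wphi (fun y => kW * Uf y)) by apply Wphi_eq.
    rewrite (Derive_ext Qphi (fun y => kQ * Pf y)) by apply Qphi_eq.
    rewrite !Derive_scal, Wphi_eq, Qphi_eq.
    rewrite (is_derive_unique _ _ _ (d_Uf x ltac:(lra))).
    rewrite (is_derive_unique _ _ _ (d_Pf x ltac:(lra))).
    replace (kW * (DD2f x * psi1 x - DD1f x * psi2 x) * (kQ * Pf x) -
      kW * Uf x * (kQ * (DD2f x * psi2 x + D2f x * D2f x + DD1f x * psi1 x + D1f x * D1f x)))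
      with ((kW * kQ) * ((DD2f x * psi1 x - DD1f x * psi2 x) * Pf x - Uf x * (DD2f x * psi2 x + D2f x * D2f x + DD1f x * psi1 x + D1f x * D1f x))) by ring.
    apply Rmult_lt_0_compat; auto. apply Rmult_lt_0_compat; auto.
  - intros x y Hx Hxy Hy.
    set (g := fun z => Uf z / Pf z).
    assert (Hg : forall z, 1 < z <= 1732/1000 -> is_derive g z
       (((DD2f z * psi1 z - DD1f z * psi2 z) * Pf z - Uf z * (DD2f z * psi2 z + D2f z * D2f z + DD1f z * psi1 z + D1f z * D1f z)) / Pf z ^ 2)).
    { intros z Hz. destruct (key z Hz) as [K1 [K2 K3]].
      apply (is_derive_div Uf Pf z). apply d_Uf; lra. apply d_Pf; lra. lra. }
    destruct (MVT_gen g x y (fun z => ((DD2f z * psi1 z - DD1f z * psi2 z) * Pf z - Uf z * (DD2f z * psi2 z + D2f z * D2f z + DD1f z * psi1 z + D1f z * D1f z)) / Pf z ^ 2)) as [c [Hc Hmvt]].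
    + intros z Hz. rewrite Rmin_left in Hz by lra. rewrite Rmax_right in Hz by lra. apply Hg. lra.
    + intros z Hz. rewrite Rmin_left in Hz by lra. rewrite Rmax_right in Hz by lra.
      apply continuity_pt_filterlim. apply (ex_derive_continuous (K:=R_AbsRing) (V:=R_NormedModule)).
      eexists. apply Hg. lra.
    + rewrite Rmin_left in Hc by lra. rewrite Rmax_right in Hc by lra.
      destruct (key c ltac:(lra)) as [K1 [K2 K3]].
      destruct (key x ltac:(lra)) as [X1 [X2 X3]].
      destruct (key y ltac:(lra)) as [Y1 [Y2 Y3]].
      assert (Hd : 0 < ((DD2f c * psi1 c - DD1f c * psi2 c) * Pf c - Uf c * (DD2f c * psi2 c + D2f c * D2f c + DD1f c * psi1 c + D1f c * D1f c)) / Pf c ^ 2).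
      { apply Rdiv_lt_0_compat; auto. apply pow_lt; auto. }
      assert (Hgxy : g x < g y).
      { assert (0 < ((DD2f c * psi1 c - DD1f c * psi2 c) * Pf c - Uf c * (DD2f c * psi2 c + D2f c * D2f c + DD1f c * psi1 c + D1f c * D1f c)) / Pf c ^ 2 * (y - x))
          by (apply Rmult_lt_0_compat; lra).
        lra. }
      assert (Hgx : 0 < g x) by (unfold g; apply Rdiv_lt_0_compat; auto).
      assert (Emu : forall z, 0 < Uf z -> 0 < Pf z -> mu z = / g z).
      { intros z H1 H2. unfold mu, g, Uf, Pf. unfold Uf, Pf in H1, H2. field. lra. }
      rewrite !Emu by auto.
      apply Rinv_lt_contravar; auto. apply Rmult_lt_0_compat; lra.
Qed.
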